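(* Let $(M,J)$ be an almost complex manifold and $\phi$ a Beltrami differential with $\det(I'-\phi\cdot\bar\phi)\neq0$ everywhere. Then, as operators on complex differential forms on $M$, $$e^{-i_\phi}\circ e^{i_\phi|i_{\bar\phi}}=(I-\bar\phi\cdot\phi+\bar\phi)\Finv,$$ $$\big(e^{i_\phi|i_{\bar\phi}}\big)^{-1}\circ e^{i_\phi}=\big(I'+(I''-\bar\phi\cdot\phi)^{-1}-\bar\phi\cdot(I'-\phi\cdot\bar\phi)^{-1}\big)\Finv.$$
   Context: $(M,J)$ is a smooth almost complex manifold of real dimension $2n$ ($J$ not assumed integrable). Locally $\{\theta^i\}_{i=1}^n$ is a frame of $(1,0)$-forms, $\{e_i\}$ the dual frame of $T^{1,0}M$, $\theta^{\bar i}=\overline{\theta^i}$, $e_{\bar i}=\overline{e_i}$. A Beltrami differential is $\phi\in A^{0,1}(M,T^{1,0}M)$. Contraction: $(\rho\otimes X)\lrcorner\alpha:=\rho\wedge(X\lrcorner\alpha)$, extended linearly; $i_\phi=\phi\lrcorner$, $e^{\pm i_\phi}:=\sum_k\frac{(\pm1)^k}{k!}i_\phi^k$. Write $\phi=\phi^i_{\bar j}\theta^{\bar j}\otimes e_i$ and $\bar\phi=\phi^{\bar i}_j\theta^j\otimes e_{\bar i}$ with $\phi^{\bar i}_j=\overline{\phi^i_{\bar j}}$. Identify these with $n\times n$ matrices $\phi=(\phi^i_{\bar j})$, $\bar\phi=(\phi^{\bar i}_j)$ (upper index = row) and $I'$, $I''$ with identity matrices; a matrix expression built from them is identified with the vector-valued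 1-form having these coefficients in the corresponding frames (frame independent): $\bar\phi\cdot\phi$ and $(I''-\bar\phi\cdot\phi)^{-1}$ are $T^{0,1}$-valued $(0,1)$-forms (coefficients times $\theta^{\bar j}\otimes e_{\bar i}$), $\bar\phi\cdot(I'-\phi\cdot\bar\phi)^{-1}$ is the $T^{0,1}$-valued $(1,0)$-form $(\bar\phi\cdot(I'-\phi\cdot\bar\phi)^{-1})^{\bar i}_j\theta^j\otimes e_{\bar i}$, $I'=\theta^i\otimes e_i$, $I''=\theta^{\bar i}\otimes e_{\bar i}$, $I=I'+I''$. For a $T^{\mathbb C}M$-valued 1-form $\varphi$, the simultaneous contraction $\varphi\Finv$ is the function-linear map on forms with $\varphi\Finv(f\beta_1\wedge\cdots\wedge\beta_k)=f(\varphi\lrcorner\beta_1)\wedge\cdots\wedge(\varphi\lrcorner\beta_k)$ for 1-forms $\beta_j$ (and $\varphi\Finv f=f$ for functions); it is not additive in $\varphi$. The extended exponential operator is $e^{i_\phi|i_{\bar\phi}}:=(I+\phi+\bar\phi)\Finv$, i.e. it sends $\theta^i\mapsto\theta^i+\phi\lrcorner\theta^i$, $\theta^{\bar j}\mapsto\theta^{\bar j}+\bar\phi\lrcorner\theta^{\bar j}$, extended multiplicatively; under the determinant condition it is a linear isomorphism on forms, and $(e^{i_\phi|i_{\bar\phi}})^{-1}$ denotes its inverse. *)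

(* Defs.v *)
(* Pointwise (fibrewise) model of complex forms on an almost
   complex manifold of real dimension 2n, in a fixed local frame
   theta^1..theta^n, theta^{bar 1}..theta^{bar n}. *)
From HB Require Import structures.
From mathcomp Require Import all_boot all_order all_algebra.
From Stdlib Require Import ClassicalEpsilon.
Set Implicit Arguments. Unset Strict Implicit. Unset Printing Implicit Defensive.
Import Order.TTheory GRing.Theory Num.Theory.
Local Open Scope ring_scope.

(* complex forms at a point: coefficient of the basis monomial
   theta^S = theta^{s1} /\ ... /\ theta^{sk}  (s1 < ... < sk) *)
Notation cform C m := {ffun {set 'I_m} -> C^o}.

Section Forms.
Variable C : numClosedFieldType.
Variable m : nat.
Local Notation form := (cform C m).

Definition mono (S : {set 'I_m}) : form := [ffun T => (T == S)%:R].
Definition theta (b : 'I_m) : form := mono [set b].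

(* sign of theta^S /\ theta^T = sign * theta^(S :|: T) when S, T disjoint *)
Definition wsign (S T : {set 'I_m}) : C :=
  (-1) ^+ #|[set p : 'I_m * 'I_m | [&& p.1 \in S, p.2 \in T & (p.2 < p.1)%N]]|.

Definition wedge (a b : form) : form :=
  \sum_(S : {set 'I_m}) \sum_(T : {set 'I_m})
     (a S * b T * (if [disjoint S & T] then wsign S T else 0)) *: mono (S :|: T).

(* interior product with the frame vector e_a (dual to theta^a) *)
Definition interior (a : 'I_m) (f : form) : form :=
  [ffun S : {set 'I_m} => if a \in S then 0
             else (-1) ^+ #|[set s in S | (s < a)%N]| * f (a |: S)].

(* A vector-valued 1-form is a matrix A with A a b = coefficient of
   theta^b (x) e_a  (upper/vector index = row). Contraction
   (rho (x) X) _| alpha := rho /\ (X _| alpha), extended linearly. *)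
Definition contr (A : 'M[C]_m) (f : form) : form :=
  \sum_(a < m) \sum_(b < m) A a b *: wedge (theta b) (interior a f).

(* simultaneous contraction: f beta_1/\../\beta_k |-> f (A_|beta_1)/\../\(A_|beta_k) *)
Definition scontr (A : 'M[C]_m) (f : form) : form :=
  \sum_(S : {set 'I_m}) f S *: \big[wedge/mono set0]_(s <- enum S) contr A (theta s).

(* e^{+- g} := sum_k (+-1)^k / k! g^k ; the sum is taken over k up to the
   dimension of the space of forms, which equals the full series for any
   nilpotent g (as i_phi is). *)
Definition opexp (sgn : C) (g : form -> form) (f : form) : form :=
  \sum_(k < #|{set 'I_m}|.+1) (sgn ^+ k / (k`!)%:R) *: iter k g f.

(* inverse of an operator (a genuine inverse when the operator is bijective) *)
Definition opinv (g : form -> form) (y : form) : form :=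
  epsilon (inhabits (0 : form)) (fun x => g x = y).

End Forms.

Section Frame.
Variable C : numClosedFieldType.
Variable n : nat.
(* indices 'I_(n+n): lshift = type (1,0) (theta^i, e_i),
   rshift = type (0,1) (theta^{bar i}, e_{bar i}) *)

Definition conjm (M : 'M[C]_n) : 'M[C]_n := map_mx (fun x => x^*) M.

(* I' = theta^i (x) e_i,  I'' = theta^{bar i} (x) e_{bar i} *)
Definition Ip : 'M[C]_(n + n) := block_mx 1%:M 0 0 0.
Definition Ipp : 'M[C]_(n + n) := block_mx 0 0 0 1%:M.
Definition Ifull : 'M[C]_(n + n) := Ip + Ipp.

(* phi = phi^i_{bar j} theta^{bar j} (x) e_i *)
Definition beltrami (phi : 'M[C]_n) : 'M[C]_(n + n) := block_mx 0 phi 0 0.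
(* bar phi = phi^{bar i}_j theta^j (x) e_{bar i} *)
Definition beltrami_bar (phi : 'M[C]_n) : 'M[C]_(n + n) := block_mx 0 0 (conjm phi) 0.
(* T^{0,1}-valued (0,1)-form with coefficient matrix M *)
Definition emb01_01 (M : 'M[C]_n) : 'M[C]_(n + n) := block_mx 0 0 0 M.
(* T^{0,1}-valued (1,0)-form with coefficient matrix M *)
Definition emb10_01 (M : 'M[C]_n) : 'M[C]_(n + n) := block_mx 0 0 M 0.

(* i_phi and e^{i_phi | i_bar phi} = (I + phi + bar phi) simultaneous contraction *)
Definition i_phi (phi : 'M[C]_n) : cform C (n + n) -> cform C (n + n) :=
  contr (beltrami phi).
Definition eext (phi : 'M[C]_n) : cform C (n + n) -> cform C (n + n) :=
  scontr (Ifull + beltrami phi + beltrami_bar phi).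

End Frame.
Arguments Ip {C n}.
Arguments Ipp {C n}.
Arguments Ifull {C n}.

(* Main.v *)
Require Import Defs.
From HB Require Import structures.
From mathcomp Require Import all_boot all_order all_algebra.
From mathcomp Require Import ring.
From Stdlib Require Import ClassicalEpsilon.
Set Implicit Arguments. Unset Strict Implicit. Unset Printing Implicit Defensive.
Import Order.TTheory GRing.Theory Num.Theory.
Local Open Scope ring_scope.
Section Forms.
Variable C : numClosedFieldType.
Variable m : nat.
Local Notation form := (cform C m).
Local Notation one := (mono C (set0 : {set 'I_m})).
Implicit Types S T U X : {set 'I_m}.

Lemma regZ (c : C) (x : C^o) : c *: x = c * x. Proof. by []. Qed.

Lemma monoE (S X : {set 'I_m}) : mono C S X = (X == S)%:R.
Proof. by rewrite ffunE. Qed.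

Lemma form_decomp (f : form) : f = \sum_S f S *: mono C S.
Proof.
apply/ffunP => X; rewrite sum_ffunE (bigD1 X) //= big1 ?addr0.
  by rewrite !ffunE eqxx regZ mulr1.
by move=> S /negPf SX; rewrite !ffunE eq_sym SX regZ mulr0.
Qed.

Definition wcoef (S T : {set 'I_m}) : C := if [disjoint S & T] then wsign C S T else 0.

Lemma sum_mono (S0 : {set 'I_m}) (F : {set 'I_m} -> form) :
  \sum_S (mono C S0 S) *: F S = F S0.
Proof.
rewrite (bigD1 S0) //= big1 ?addr0 => [|S /negPf nS]; first by rewrite ffunE eqxx scale1r.
by rewrite ffunE nS scale0r.
Qed.

Lemma wedge_mono S T : wedge (mono C S) (mono C T) = wcoef S T *: mono C (S :|: T).
Proof.
rewrite /wedge.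
transitivity (\sum_S' mono C S S' *: \sum_T' mono C T T' *: (wcoef S' T' *: mono C (S' :|: T'))).
  apply: eq_bigr => S' _; rewrite scaler_sumr; apply: eq_bigr => T' _.
  by rewrite !scalerA.
transitivity (\sum_S' mono C S S' *: (wcoef S' T *: mono C (S' :|: T))).
  apply: eq_bigr => S' _; congr (_ *: _).
  exact: (sum_mono T (fun T' => wcoef S' T' *: mono C (S' :|: T'))).
exact: (sum_mono S (fun S' => wcoef S' T *: mono C (S' :|: T))).
Qed.

Lemma wedgeE (a b : form) : wedge a b =
  \sum_S \sum_T (a S * b T) *: wedge (mono C S) (mono C T).
Proof.
apply: eq_bigr => S _; apply: eq_bigr => T _.
by rewrite wedge_mono scalerA.
Qed.

Lemma wedgeDl (a a' b : form) : wedge (a + a') b = wedge a b + wedge a' b.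
Proof.
rewrite /wedge -big_split; apply: eq_bigr => S _; rewrite -big_split.
by apply: eq_bigr => T _; rewrite ffunE !mulrDl scalerDl.
Qed.
Lemma wedgeDr (a b b' : form) : wedge a (b + b') = wedge a b + wedge a b'.
Proof.
rewrite /wedge -big_split; apply: eq_bigr => S _; rewrite -big_split.
by apply: eq_bigr => T _; rewrite ffunE !mulrDr !mulrDl scalerDl.
Qed.
Lemma wedgeZl c (a b : form) : wedge (c *: a) b = c *: wedge a b.
Proof.
rewrite /wedge scaler_sumr; apply: eq_bigr => S _; rewrite scaler_sumr.
by apply: eq_bigr => T _; rewrite ffunE scalerA !mulrA.
Qed.
Lemma wedgeZr c (a b : form) : wedge a (c *: b) = c *: wedge a b.
Proof.
rewrite /wedge scaler_sumr; apply: eq_bigr => S _; rewrite scaler_sumr.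
by apply: eq_bigr => T _; rewrite ffunE scalerA; congr (_ *: _); rewrite /= mulrCA !mulrA.
Qed.
Definition W := locked (@wedge C m).
Lemma WE : @wedge C m = W. Proof. by rewrite /W -lock. Qed.
Lemma W_mono S T : W (mono C S) (mono C T) = wcoef S T *: mono C (S :|: T).
Proof. by rewrite -WE wedge_mono. Qed.
Lemma WDl (a a' b : form) : W (a + a') b = W a b + W a' b.
Proof. by rewrite -WE wedgeDl. Qed.
Lemma WDr (a b b' : form) : W a (b + b') = W a b + W a b'.
Proof. by rewrite -WE wedgeDr. Qed.
Lemma WZl c (a b : form) : W (c *: a) b = c *: W a b.
Proof. by rewrite -WE wedgeZl. Qed.
Lemma WZr c (a b : form) : W a (c *: b) = c *: W a b.
Proof. by rewrite -WE wedgeZr. Qed.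
Lemma W0l (b : form) : W 0 b = 0.
Proof. have h := WDl 0 0 b; rewrite addr0 in h.
by apply: (addrI (W 0 b)); rewrite -h addr0. Qed.
Lemma W0r (b : form) : W b 0 = 0.
Proof. have h := WDr b 0 0; rewrite addr0 in h.
by apply: (addrI (W b 0)); rewrite -h addr0. Qed.
Lemma W_suml (I : finType) (F : I -> form) b :
  W (\sum_i F i) b = \sum_i W (F i) b.
Proof. exact: (big_morph (fun a => W a b) (fun x y => WDl x y b) (W0l b)). Qed.
Lemma W_sumr (I : finType) (F : I -> form) b :
  W b (\sum_i F i) = \sum_i W b (F i).
Proof. exact: (big_morph (fun a => W b a) (fun x y => WDr b x y) (W0r b)). Qed.
Lemma WNl (a b : form) : W (- a) b = - W a b.
Proof. by rewrite -scaleN1r WZl scaleN1r. Qed.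
Lemma WNr (a b : form) : W a (- b) = - W a b.
Proof. by rewrite -scaleN1r WZr scaleN1r. Qed.


Definition invs (S T : {set 'I_m}) :=
  [set p : 'I_m * 'I_m | [&& p.1 \in S, p.2 \in T & (p.2 < p.1)%N]].

Lemma wsignE S T : wsign C S T = (-1) ^+ #|invs S T|.
Proof. by []. Qed.

Lemma dis_Ul (S T U : {set 'I_m}) :
  [disjoint S :|: T & U] = [disjoint S & U] && [disjoint T & U].
Proof. by rewrite -!setI_eq0 setIUl setU_eq0. Qed.
Lemma dis_Ur (S T U : {set 'I_m}) :
  [disjoint S & T :|: U] = [disjoint S & T] && [disjoint S & U].
Proof. by rewrite disjoint_sym dis_Ul (disjoint_sym T) (disjoint_sym U). Qed.

Lemma dis0l S : [disjoint set0 & S]. Proof. by rewrite -setI_eq0 set0I. Qed.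
Lemma dis0r S : [disjoint S & set0]. Proof. by rewrite -setI_eq0 setI0. Qed.

Lemma card_disU (TT : finType) (A B : {set TT}) : [disjoint A & B] -> #|A :|: B| = (#|A| + #|B|)%N.
Proof. by move=> d; rewrite -cardsUI; move: d; rewrite -setI_eq0 => /eqP ->; rewrite cards0 addn0. Qed.

Lemma wsign_Ul S T U : [disjoint S & T] -> wsign C (S :|: T) U = wsign C S U * wsign C T U.
Proof.
move=> d; rewrite !wsignE.
have -> : invs (S :|: T) U = invs S U :|: invs T U.
  by apply/setP => p; rewrite /invs !inE andb_orl.
rewrite card_disU ?exprD //.
rewrite -setI_eq0; apply/eqP/setP => p; rewrite /invs !inE.
apply/negP => /andP[/and3P[pS _ _] /and3P[pT _ _]].
by move: d; rewrite -setI_eq0 => /eqP/setP/(_ p.1); rewrite !inE pS pT.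
Qed.

Lemma wsign_Ur S T U : [disjoint T & U] -> wsign C S (T :|: U) = wsign C S T * wsign C S U.
Proof.
move=> d; rewrite !wsignE.
have -> : invs S (T :|: U) = invs S T :|: invs S U.
  by apply/setP => p; rewrite /invs !inE andb_orl andb_orr.
rewrite card_disU ?exprD //.
rewrite -setI_eq0; apply/eqP/setP => p; rewrite /invs !inE.
apply/negP => /andP[/and3P[_ pS _] /and3P[_ pT _]].
by move: d; rewrite -setI_eq0 => /eqP/setP/(_ p.2); rewrite !inE pS pT.
Qed.

Lemma wsign0l T : wsign C set0 T = 1.
Proof. rewrite wsignE (_ : invs _ _ = set0) ?cards0 //; apply/setP => p; by rewrite !inE. Qed.
Lemma wsign0r T : wsign C T set0 = 1.
Proof. rewrite wsignE (_ : invs _ _ = set0) ?cards0 //; apply/setP => p; by rewrite !inE andbF. Qed.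

Lemma wcoefA S T U : wcoef S T * wcoef (S :|: T) U = wcoef T U * wcoef S (T :|: U).
Proof.
rewrite /wcoef dis_Ul dis_Ur.
case dST: [disjoint S & T]; case dSU: [disjoint S & U]; case dTU: [disjoint T & U];
  rewrite ?mulr0 ?mul0r //=.
by rewrite wsign_Ul // wsign_Ur //; ring.
Qed.

Lemma W_monoA S T U : W (W (mono C S) (mono C T)) (mono C U) =
  W (mono C S) (W (mono C T) (mono C U)).
Proof.
rewrite !W_mono WZl WZr !W_mono !scalerA setUA.
by rewrite wcoefA mulrC.
Qed.

Lemma WA (a b c : form) : W (W a b) c = W a (W b c).
Proof.
rewrite (form_decomp a) W_suml W_suml W_suml; apply: eq_bigr => S _.
rewrite !WZl; congr (_ *: _).
rewrite (form_decomp b) W_sumr W_suml W_suml W_sumr; apply: eq_bigr => T _.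
rewrite WZr WZl WZl WZr; congr (_ *: _).
rewrite (form_decomp c) W_sumr W_sumr W_sumr; apply: eq_bigr => U _.
by rewrite WZr WZr WZr W_monoA.
Qed.

Lemma W1l (f : form) : W one f = f.
Proof.
rewrite {1}(form_decomp f) W_sumr [RHS]form_decomp; apply: eq_bigr => S _.
by rewrite WZr W_mono /wcoef dis0l wsign0l scale1r set0U.
Qed.
Lemma W1r (f : form) : W f one = f.
Proof.
rewrite {1}(form_decomp f) W_suml [RHS]form_decomp; apply: eq_bigr => S _.
by rewrite WZl W_mono /wcoef dis0r wsign0r scale1r setU0.
Qed.


Definition kk (a : 'I_m) S := #|[set s in S | (s < a)%N]|.

Lemma wsign1 a S : wsign C [set a] S = (-1) ^+ kk a S.
Proof.
rewrite wsignE /kk.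
have -> : invs [set a] S = (fun s => (a, s)) @: [set s in S | (s < a)%N].
  apply/setP => [[x y]]; rewrite /invs !inE /=.
  apply/and3P/imsetP => [[/eqP -> yS ya]|[z]]; first by exists y; rewrite // !inE yS.
  by rewrite !inE => /andP[zS za] [-> ->]; rewrite eqxx zS.
by rewrite card_imset // => x y [].
Qed.

Lemma theta_mono a S : W (theta C a) (mono C S) =
  if a \in S then (0 : form) else ((-1) ^+ kk a S : C) *: mono C (a |: S).
Proof.
rewrite /theta W_mono /wcoef disjoints1 wsign1.
by case: (a \in S); rewrite ?scale0r.
Qed.

Lemma kU1 (c x : 'I_m) S : c \notin S -> kk x (c |: S) = ((c < x)%N + kk x S)%N.
Proof.
move=> cS; rewrite /kk.
have -> : [set s in c |: S | (s < x)%N] =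
  (if (c < x)%N then c |: [set s in S | (s < x)%N] else [set s in S | (s < x)%N]).
  apply/setP => s; case: ifP => cx; rewrite !inE;
    case: (eqVneq s c) => [->|] //=; by rewrite ?cx ?andbF.
case: ifP => cx //; by rewrite cardsU1 inE (negPf cS).
Qed.

Lemma kD1 (c x : 'I_m) S : c \in S -> kk x S = ((c < x)%N + kk x (S :\ c))%N.
Proof.
move=> cS; rewrite -kU1 ?setD11 //; by rewrite setD1K.
Qed.

Lemma kself (x : 'I_m) S : kk x (S :\ x) = kk x S.
Proof.
rewrite /kk; have -> // : [set s in S :\ x | (s < x)%N] = [set s in S | (s < x)%N].
by apply/setP => s; rewrite !inE; case: (eqVneq s x) => [->|] //=; rewrite ltnn !andbF.
Qed.

Lemma sgn_odd (k : nat) : (-1 : C) ^+ k = (-1) ^+ (odd k).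
Proof. by rewrite signr_odd. Qed.

Lemma theta_anti a b : W (theta C a) (theta C b) = - W (theta C b) (theta C a).
Proof.
rewrite /theta -/(theta C b) theta_mono -/(theta C a) theta_mono !inE.
case: (a =P b) => [->|/eqP ab]; first by rewrite eqxx oppr0.
rewrite eq_sym (negPf ab) setUC /kk.
have e : forall x y : 'I_m, [set s in [set y] | (s < x)%N] = if (y < x)%N then [set y] else set0.
  move=> x y; apply/setP => s; rewrite !inE; case: ifP; rewrite ?inE;
  by case: eqP => [->|] //= ->; rewrite ?andbF.
rewrite !e; case: ltngtP => h; rewrite ?cards1 ?cards0 ?expr1 ?expr0 ?scaleN1r ?opprK ?scale1r //.
by move/val_inj: h ab => ->; rewrite eqxx.
Qed.

Lemma theta_sq a : W (theta C a) (theta C a) = 0.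
Proof. by rewrite /theta -/(theta C a) theta_mono set11. Qed.

Definition row1 (A : 'M[C]_m) (a : 'I_m) : form := \sum_b A a b *: theta C b.

Lemma W_row1l A a f : W (row1 A a) f = \sum_b A a b *: W (theta C b) f.
Proof. by rewrite W_suml; apply: eq_bigr => b _; rewrite WZl. Qed.
Lemma W_row1r A a f : W f (row1 A a) = \sum_b A a b *: W f (theta C b).
Proof. by rewrite W_sumr; apply: eq_bigr => b _; rewrite WZr. Qed.

Lemma W_row1 A B a b : W (row1 A a) (row1 B b) =
  \sum_c \sum_d (A a c * B b d) *: W (theta C c) (theta C d).
Proof.
rewrite W_row1l; apply: eq_bigr => c _; rewrite W_row1r scaler_sumr.
by apply: eq_bigr => d _; rewrite scalerA.
Qed.

Lemma row1_anti A B a b : W (row1 A a) (row1 B b) = - W (row1 B b) (row1 A a).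
Proof.
rewrite !W_row1 exchange_big /= -sumrN; apply: eq_bigr => c _.
rewrite -sumrN; apply: eq_bigr => d _.
by rewrite theta_anti scalerN mulrC.
Qed.

Lemma half0 (x : form) : x = - x -> x = 0.
Proof.
move=> h; apply/ffunP => X; have := congr1 (fun f : form => f X) h.
rewrite !ffunE => hx; apply/eqP.
have : (x X) *+ 2 == 0 by rewrite mulr2n {1}hx addNr.
by rewrite mulrn_eq0.
Qed.

Lemma row1_sq A a : W (row1 A a) (row1 A a) = 0.
Proof. by apply: half0; rewrite {1}row1_anti. Qed.


Definition Pw (w : 'I_m -> form) (l : seq 'I_m) : form := \big[W/one]_(s <- l) w s.

Lemma Pw_nil w : Pw w [::] = one. Proof. by rewrite /Pw big_nil. Qed.
Lemma Pw_cons w x l : Pw w (x :: l) = W (w x) (Pw w l). Proof. by rewrite /Pw big_cons. Qed.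

Lemma Pw_move A B b l : W (row1 B b) (Pw (row1 A) l) =
  ((-1) ^+ size l : C) *: W (Pw (row1 A) l) (row1 B b).
Proof.
elim: l => [|x l IH]; first by rewrite Pw_nil W1l W1r expr0 scale1r.
rewrite Pw_cons -WA row1_anti WNl WA IH WZr -WA -scaleN1r scalerA.
by rewrite exprS mulrC.
Qed.

Lemma sgn_sq (k : nat) : (-1) ^+ k * (-1) ^+ k = 1 :> C.
Proof. by rewrite -exprD -signr_odd oddD addbb. Qed.

Lemma ins_gen A (L : seq 'I_m) a S :
  sorted (fun x y : 'I_m => (x < y)%N) L -> a \in L -> a \notin S ->
  Pw (row1 A) [seq s <- L | s \in a |: S] =
  ((-1) ^+ (count (fun s : 'I_m => (s \in S) && (s < a)%N) L) : C) *:
     W (row1 A a) (Pw (row1 A) [seq s <- L | s \in S]).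
Proof.
move=> + + aS; elim: L => // x L IH sxL.
have tr : transitive (fun x y : 'I_m => (x < y)%N) by move=> u v w; apply: ltn_trans.
have allx := order_path_min tr sxL.
have sL := path_sorted sxL.
rewrite inE => /orP[/eqP ax|aL].
  subst x.
  have aL : a \notin L.
    by apply/negP => /(allP allx); rewrite ltnn.
  rewrite /= setU11 (negPf aS) /= Pw_cons.
  have -> : [seq s <- L | s \in a |: S] = [seq s <- L | s \in S].
    apply: eq_in_filter => s sL'; rewrite !inE.
    by case: (s =P a) => // e; rewrite -e sL' in aL.
  rewrite (eq_in_count (a2 := pred0)); first by rewrite count_pred0 expr0 scale1r.
  move=> s /(allP allx) ltas /=; apply/negP => /andP[_ /(ltn_trans ltas)].
  by rewrite ltnn.
have xa : (x < a)%N by apply: (allP allx).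
have xna : x != a by apply/negP => /eqP e; rewrite e ltnn in xa.
rewrite /= !inE (negPf xna) /= xa andbT.
case xS: (x \in S) => /=; last by rewrite IH.
rewrite !Pw_cons IH // WZr -!WA (row1_anti A A x a) WNl scalerN -scaleN1r scalerA.
by rewrite ?add1n exprS.
Qed.

Lemma enum_filter (S : {set 'I_m}) : enum S = [seq s <- enum 'I_m | s \in S].
Proof. by rewrite -deprecated_filter_index_enum [index_enum _]unlock enumT. Qed.

Lemma sorted_enum : sorted (fun x y : 'I_m => (x < y)%N) (enum 'I_m).
Proof. by have := iota_ltn_sorted 0 m; rewrite -val_enum_ord sorted_map. Qed.

Lemma count_kk (a : 'I_m) S : count (fun s : 'I_m => (s \in S) && (s < a)%N) (enum 'I_m) = kk a S.
Proof.
rewrite /kk cardE enum_filter size_filter; apply: eq_count => s.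
by rewrite inE.
Qed.

Lemma Pw_ins A (a : 'I_m) S : a \notin S ->
  Pw (row1 A) (enum (a |: S)) = ((-1) ^+ kk a S : C) *: W (row1 A a) (Pw (row1 A) (enum S)).
Proof.
move=> aS; rewrite !enum_filter ins_gen ?count_kk //; first exact: sorted_enum.
by rewrite mem_enum.
Qed.

Lemma row1_1 (a : 'I_m) : row1 1%:M a = theta C a.
Proof.
rewrite /row1 (bigD1 a) //= big1 ?addr0 => [|b ba]; first by rewrite mxE eqxx scale1r.
by rewrite mxE eq_sym (negPf ba) scale0r.
Qed.

Lemma mono_ins (a : 'I_m) S : a \notin S -> mono C (a |: S) = ((-1) ^+ kk a S : C) *: W (theta C a) (mono C S).
Proof. by move=> aS; rewrite theta_mono (negPf aS) scalerA sgn_sq scale1r. Qed.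

Lemma set_ind (P : {set 'I_m} -> Prop) : P set0 ->
  (forall a S, a \notin S -> P S -> P (a |: S)) -> forall S, P S.
Proof.
move=> P0 Pstep S; elim: {S}_.+1 {-2}S (ltnSn #|S|) => // N IH S.
case: (set_0Vmem S) => [->|[a aS]] // ltS.
rewrite -(setD1K aS); apply: Pstep; first by rewrite setD11.
apply: IH; rewrite -ltnS; apply: leq_trans ltS; rewrite ltnS.
by rewrite (cardsD1 a S) aS.
Qed.

Lemma Pw_mono S : Pw (row1 1%:M) (enum S) = mono C S.
Proof.
elim/set_ind: S => [|a S aS IH]; first by rewrite enum_set0 Pw_nil.
by rewrite Pw_ins // IH row1_1 mono_ins.
Qed.


Definition Psi (w : 'I_m -> form) (f : form) : form := \sum_S f S *: Pw w (enum S).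

Lemma Psi_mono w S : Psi w (mono C S) = Pw w (enum S).
Proof. exact: (sum_mono S (fun S' => Pw w (enum S'))). Qed.

Lemma PsiD w f g : Psi w (f + g) = Psi w f + Psi w g.
Proof. by rewrite /Psi -big_split; apply: eq_bigr => S _; rewrite ffunE scalerDl. Qed.
Lemma PsiZ w c f : Psi w (c *: f) = c *: Psi w f.
Proof. by rewrite /Psi scaler_sumr; apply: eq_bigr => S _; rewrite ffunE scalerA. Qed.
Lemma Psi0 w : Psi w 0 = 0.
Proof. by rewrite /Psi big1 // => S _; rewrite ffunE scale0r. Qed.
Lemma Psi_sum w (I : finType) (F : I -> form) : Psi w (\sum_i F i) = \sum_i Psi w (F i).
Proof. exact: (big_morph (Psi w) (PsiD w) (Psi0 w)). Qed.

Lemma Psi_decomp w f : Psi w f = \sum_S f S *: Psi w (mono C S).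
Proof. by apply: eq_bigr => S _; rewrite Psi_mono. Qed.

Lemma Psi_one w : Psi w one = one.
Proof. by rewrite Psi_mono enum_set0 Pw_nil. Qed.

Lemma Psi_theta_W A (a : 'I_m) f :
  Psi (row1 A) (W (theta C a) f) = W (row1 A a) (Psi (row1 A) f).
Proof.
rewrite {1}(form_decomp f) W_sumr Psi_sum Psi_decomp W_sumr.
apply: eq_bigr => S _; rewrite WZr PsiZ WZr; congr (_ *: _).
rewrite theta_mono Psi_mono; case: ifP => aS.
  rewrite Psi0 -(setD1K aS) Pw_ins ?setD11 // WZr -WA row1_sq W0l scaler0 //.
by rewrite PsiZ Psi_mono Pw_ins ?aS // scalerA sgn_sq scale1r.
Qed.

Lemma Psi_W A f g : Psi (row1 A) (W f g) = W (Psi (row1 A) f) (Psi (row1 A) g).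
Proof.
rewrite (form_decomp f) W_suml Psi_sum Psi_sum W_suml; apply: eq_bigr => S _.
rewrite WZl PsiZ PsiZ WZl; congr (_ *: _).
elim/set_ind: S => [|a S aS IH]; first by rewrite W1l Psi_one W1l.
rewrite mono_ins // WZl !PsiZ WZl WA !Psi_theta_W IH WA //.
Qed.

Lemma Psi_Pw A v l : Psi (row1 A) (Pw v l) = Pw (fun s => Psi (row1 A) (v s)) l.
Proof.
elim: l => [|x l IH]; first by rewrite !Pw_nil Psi_one.
by rewrite !Pw_cons Psi_W IH.
Qed.

Lemma Psi_ext w w' f : (forall s, w s = w' s) -> Psi w f = Psi w' f.
Proof.
move=> e; apply: eq_bigr => S _; congr (_ *: _).
by apply: eq_bigr => s _; rewrite e.
Qed.

Lemma Psi_comp A v f : Psi (row1 A) (Psi v f) = Psi (fun s => Psi (row1 A) (v s)) f.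
Proof.
rewrite Psi_sum; apply: eq_bigr => S _.
by rewrite PsiZ Psi_Pw.
Qed.

Lemma Psi_theta A (b : 'I_m) : Psi (row1 A) (theta C b) = row1 A b.
Proof. by rewrite Psi_mono enum_set1 Pw_cons Pw_nil W1r. Qed.

Lemma Psi_row1 A B (a : 'I_m) : Psi (row1 A) (row1 B a) = row1 (B *m A) a.
Proof.
rewrite Psi_sum.
transitivity (\sum_b \sum_c (B a b * A b c) *: theta C c).
  apply: eq_bigr => b _; rewrite PsiZ Psi_theta scaler_sumr.
  by apply: eq_bigr => c _; rewrite scalerA.
rewrite exchange_big /=; apply: eq_bigr => c _.
by rewrite mxE scaler_suml.
Qed.

Lemma Psi_compM A B f : Psi (row1 A) (Psi (row1 B) f) = Psi (row1 (B *m A)) f.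
Proof. by rewrite Psi_comp; apply: Psi_ext => s; rewrite Psi_row1. Qed.

Lemma Psi_id f : Psi (row1 1%:M) f = f.
Proof. by rewrite [RHS]form_decomp; apply: eq_bigr => S _; rewrite Pw_mono. Qed.


Definition Int (c : 'I_m) := locked (@interior C m c).
Lemma IntE c : @interior C m c = Int c. Proof. by rewrite /Int -lock. Qed.

Lemma IntD c f g : Int c (f + g) = Int c f + Int c g.
Proof. by rewrite -IntE; apply/ffunP => X; rewrite !ffunE; case: ifP; rewrite ?addr0 // mulrDr. Qed.
Lemma IntZ c k f : Int c (k *: f) = k *: Int c f.
Proof. by rewrite -IntE; apply/ffunP => X; rewrite !ffunE; case: ifP; rewrite ?regZ ?mulr0 // mulrCA. Qed.
Lemma Int0 c : Int c 0 = 0.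
Proof. by rewrite -IntE; apply/ffunP => X; rewrite !ffunE; case: ifP; rewrite ?mulr0. Qed.
Lemma Int_sum c (I : finType) (F : I -> form) : Int c (\sum_i F i) = \sum_i Int c (F i).
Proof. exact: (big_morph (Int c) (IntD c) (Int0 c)). Qed.

Lemma Int_mono (c : 'I_m) S :
  Int c (mono C S) = if c \in S then ((-1) ^+ kk c S : C) *: mono C (S :\ c) else (0 : form).
Proof.
rewrite -IntE; apply/ffunP => X; rewrite !ffunE.
case: ifP => cX.
  case: ifP => cS; rewrite ffunE // ffunE regZ.
  by case: eqP => [eX|_] /=; [rewrite eX setD11 in cX | rewrite mulr0].
case: ifP => cS; last first.
  rewrite ffunE; case: eqP => [eX|_] /=; last by rewrite mulr0.
  by rewrite -eX setU11 in cS.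
rewrite !ffunE regZ.
have -> : (c |: X == S) = (X == S :\ c).
  apply/eqP/eqP => [<-|->]; first by rewrite setU1K ?cX.
  by rewrite setD1K.
case: eqP => [->|_] /=; last by rewrite !mulr0.
by rewrite -[#|_|]/(kk c (S :\ c)) kself.
Qed.

Definition Ct (A : 'M[C]_m) := locked (@contr C m A).
Lemma CtE A : @contr C m A = Ct A. Proof. by rewrite /Ct -lock. Qed.

Lemma CtD A f g : Ct A (f + g) = Ct A f + Ct A g.
Proof.
rewrite -CtE /contr -big_split; apply: eq_bigr => a _; rewrite -big_split.
by apply: eq_bigr => b _; rewrite !WE !IntE IntD WDr scalerDr.
Qed.
Lemma CtZ A k f : Ct A (k *: f) = k *: Ct A f.
Proof.
rewrite -CtE /contr scaler_sumr; apply: eq_bigr => a _; rewrite scaler_sumr.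
by apply: eq_bigr => b _; rewrite !WE !IntE IntZ WZr !scalerA mulrC.
Qed.
Lemma Ct0 A : Ct A 0 = 0.
Proof. have h := CtD A 0 0; rewrite addr0 in h.
by apply: (addrI (Ct A 0)); rewrite -h addr0. Qed.
Lemma Ct_sum A (I : finType) (F : I -> form) : Ct A (\sum_i F i) = \sum_i Ct A (F i).
Proof. exact: (big_morph (Ct A) (CtD A) (Ct0 A)). Qed.

Lemma CtE2 A f : Ct A f = \sum_a \sum_b A a b *: W (theta C b) (Int a f).
Proof. by rewrite -CtE /contr WE; under eq_bigr do under eq_bigr do rewrite IntE. Qed.

Lemma Int_theta (a c : 'I_m) : Int a (theta C c) = (a == c)%:R *: one.
Proof.
rewrite /theta Int_mono inE; case: eqP => [->|_]; last by rewrite scale0r.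
rewrite setDv /kk (_ : [set s in [set c] | (s < c)%N] = set0) ?cards0 ?expr0 //.
by apply/setP => s; rewrite !inE; case: eqP => // ->; rewrite ltnn.
Qed.

Lemma sum_delta (I : finType) (c : I) (F : I -> form) : \sum_a (a == c)%:R *: F a = F c.
Proof.
rewrite (bigD1 c) //= big1 ?addr0 => [|a /negPf ac]; first by rewrite eqxx scale1r.
by rewrite ac scale0r.
Qed.

Lemma Ct_theta A (c : 'I_m) : Ct A (theta C c) = row1 A c.
Proof.
rewrite CtE2 -(sum_delta c (row1 A)); apply: eq_bigr => a _.
rewrite scaler_sumr; apply: eq_bigr => b _.
by rewrite Int_theta WZr W1r !scalerA mulrC.
Qed.

Lemma Ct_one A : Ct A one = 0.
Proof.
rewrite CtE2 big1 // => a _; rewrite big1 // => b _.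
by rewrite Int_mono inE W0r scaler0.
Qed.


Lemma sgn_ne (a c : 'I_m) : a != c -> (-1) ^+ (c < a)%N * (-1) ^+ (a < c)%N = -1 :> C.
Proof.
move=> ac; case: ltngtP => h; rewrite ?expr0 ?expr1 ?mulr1 ?mul1r //.
by move/val_inj: h ac => ->; rewrite eqxx.
Qed.

Lemma Int_theta_mono (c a : 'I_m) S :
  Int c (W (theta C a) (mono C S)) = (c == a)%:R *: mono C S - W (theta C a) (Int c (mono C S)).
Proof.
rewrite theta_mono; case: ifP => aS.
  rewrite Int0 Int_mono; case: (c =P a) => [->|/eqP ca] /=.
    rewrite aS WZr theta_mono setD11 scalerA -(kself a S) sgn_sq scale1r setD1K //.
    by rewrite scale1r subrr.
  rewrite scale0r sub0r; case: ifP => cS; last by rewrite (W0r (theta C a)) oppr0.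
  by rewrite WZr theta_mono !inE aS andbT eq_sym ca scaler0 oppr0.
rewrite IntZ Int_mono !inE; case: (c =P a) => [->|/eqP ca] /=.
  rewrite Int_mono aS W0r subr0 scale1r setU1K ?aS // kU1 ?aS // ltnn add0n.
  by rewrite scalerA sgn_sq scale1r.
rewrite scale0r sub0r; rewrite Int_mono; case: ifP => cS; last by rewrite scaler0 (W0r (theta C a)) oppr0.
rewrite WZr theta_mono !inE eq_sym ca aS /=.
have aS' : a \notin S by rewrite aS.
rewrite (kU1 c aS') (kD1 a cS) !scalerA.
have -> : (a |: S) :\ c = a |: (S :\ c).
  apply/setP => s; rewrite !inE; case: (s =P c) => [->|] //=.
  by rewrite orbF (negPf ca).
rewrite -scaleNr; congr (_ *: _).
rewrite !exprD mulrACA sgn_ne; [ring | by rewrite eq_sym].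
Qed.

Lemma Int_theta_W (c a : 'I_m) g :
  Int c (W (theta C a) g) = (c == a)%:R *: g - W (theta C a) (Int c g).
Proof.
rewrite (form_decomp g) W_sumr !Int_sum W_sumr scaler_sumr -sumrB.
apply: eq_bigr => S _; rewrite WZr !IntZ WZr Int_theta_mono scalerBr.
by rewrite !scalerA mulrC.
Qed.

Lemma Ct_theta_W A (a : 'I_m) g :
  Ct A (W (theta C a) g) = W (row1 A a) g + W (theta C a) (Ct A g).
Proof.
rewrite CtE2.
transitivity (\sum_c \sum_b A c b *: ((c == a)%:R *: W (theta C b) g) +
              \sum_c \sum_b A c b *: W (theta C a) (W (theta C b) (Int c g))).
  rewrite -big_split; apply: eq_bigr => c _; rewrite -big_split; apply: eq_bigr => b _.
  rewrite Int_theta_W WDr WNr WZr /= -scalerDr; congr (_ *: (_ + _)).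
  by rewrite -!WA theta_anti WNl opprK.
congr (_ + _).
  rewrite W_row1l exchange_big /=; apply: eq_bigr => b _.
  rewrite -(sum_delta a (fun c => A c b *: W (theta C b) g)); apply: eq_bigr => c _.
  by rewrite !scalerA mulrC.
rewrite CtE2 W_sumr; apply: eq_bigr => c _; rewrite W_sumr; apply: eq_bigr => b _.
by rewrite WZr.
Qed.

Lemma Ct_row1 A B (a : 'I_m) : Ct A (row1 B a) = row1 (B *m A) a.
Proof.
rewrite Ct_sum.
transitivity (\sum_b \sum_c (B a b * A b c) *: theta C c).
  apply: eq_bigr => b _; rewrite CtZ Ct_theta scaler_sumr.
  by apply: eq_bigr => c _; rewrite scalerA.
rewrite exchange_big /=; apply: eq_bigr => c _.
by rewrite mxE scaler_suml.
Qed.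

Lemma Ct_row1_W A B (a : 'I_m) g :
  Ct A (W (row1 B a) g) = W (row1 (B *m A) a) g + W (row1 B a) (Ct A g).
Proof.
rewrite W_row1l Ct_sum.
transitivity (\sum_b B a b *: W (row1 A b) g + \sum_b B a b *: W (theta C b) (Ct A g)).
  by rewrite -big_split; apply: eq_bigr => b _; rewrite CtZ Ct_theta_W scalerDr.
congr (_ + _); last by rewrite W_row1l.
rewrite -Ct_row1 (_ : row1 B a = \sum_b B a b *: theta C b) // Ct_sum W_suml.
by apply: eq_bigr => b _; rewrite CtZ Ct_theta WZl.
Qed.


Lemma row1_0 (a : 'I_m) : row1 0 a = 0.
Proof. by rewrite /row1 big1 // => b _; rewrite mxE scale0r. Qed.

Lemma row1D A B (a : 'I_m) : row1 (A + B) a = row1 A a + row1 B a.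
Proof. by rewrite /row1 -big_split; apply: eq_bigr => b _; rewrite mxE scalerDl. Qed.
Lemma row1Z (s : C) A (a : 'I_m) : row1 (s *: A) a = s *: row1 A a.
Proof. by rewrite /row1 scaler_sumr; apply: eq_bigr => b _; rewrite mxE scalerA. Qed.

Lemma iterD A k f g : iter k (Ct A) (f + g) = iter k (Ct A) f + iter k (Ct A) g.
Proof. by elim: k => //= k ->; rewrite CtD. Qed.
Lemma iterZ A k (c : C) f : iter k (Ct A) (c *: f) = c *: iter k (Ct A) f.
Proof. by elim: k => //= k ->; rewrite CtZ. Qed.
Lemma iter0 A k : iter k (Ct A) 0 = 0.
Proof. by elim: k => //= k ->; rewrite Ct0. Qed.

Lemma addr_shuffle (V : lmodType C) (x y : V) (k : nat) :
  x + y + k.+1%:R *: x = y + k.+2%:R *: x.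
Proof. by rewrite [k.+2%:R]mulrS scalerDl scale1r addrCA addrA. Qed.

Lemma iterCt A (AA : A *m A = 0) k (a : 'I_m) g :
  iter k (Ct A) (W (theta C a) g) =
  W (theta C a) (iter k (Ct A) g) + k%:R *: W (row1 A a) (iter k.-1 (Ct A) g).
Proof.
elim: k => [|k IH]; first by rewrite /= scale0r addr0.
rewrite iterS IH CtD Ct_theta_W CtZ Ct_row1_W AA row1_0 W0l add0r -iterS.
case: k IH => [|k] IH /=.
  by rewrite scale0r addr0 scale1r; apply: addrC.
exact: addr_shuffle.
Qed.

Definition EN (s : C) (D : form -> form) (N : nat) (f : form) : form :=
  \sum_(k < N.+1) (s ^+ k / (k`!)%:R) *: iter k D f.

Lemma ENZ A s N (c : C) f : EN s (Ct A) N (c *: f) = c *: EN s (Ct A) N f.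
Proof.
rewrite /EN scaler_sumr; apply: eq_bigr => k _.
by rewrite iterZ !scalerA mulrC.
Qed.
Lemma END A s N f g : EN s (Ct A) N (f + g) = EN s (Ct A) N f + EN s (Ct A) N g.
Proof. by rewrite /EN -big_split; apply: eq_bigr => k _; rewrite iterD scalerDr. Qed.
Lemma EN0 A s N : EN s (Ct A) N 0 = 0.
Proof. by rewrite /EN big1 // => k _; rewrite iter0 scaler0. Qed.
Lemma EN_sum A s N (I : finType) (F : I -> form) :
  EN s (Ct A) N (\sum_i F i) = \sum_i EN s (Ct A) N (F i).
Proof. exact: (big_morph (EN s (Ct A) N) (END A s N) (EN0 A s N)). Qed.

Lemma fact_neq0 k : (k`!)%:R != 0 :> C.
Proof. by rewrite pnatr_eq0 -lt0n fact_gt0. Qed.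

Lemma EN_theta A (AA : A *m A = 0) s N (a : 'I_m) g :
  EN s (Ct A) N.+1 (W (theta C a) g) =
  W (theta C a) (EN s (Ct A) N.+1 g) + s *: W (row1 A a) (EN s (Ct A) N g).
Proof.
rewrite /EN.
under eq_bigr do rewrite iterCt // scalerDr.
rewrite big_split /=; congr (_ + _).
  by rewrite W_sumr; apply: eq_bigr => k _; rewrite WZr.
rewrite big_ord_recl /= scale0r scaler0 add0r W_sumr scaler_sumr.
apply: eq_bigr => k _; rewrite WZr !scalerA; congr (_ *: _).
rewrite /bump /= add1n factS natrM exprS.
have h1 := fact_neq0 k.
have h2 : (k.+1)%:R != 0 :> C by rewrite pnatr_eq0.
by field; rewrite h1 -mulrS h2.
Qed.

Lemma iter_one A k : iter k.+1 (Ct A) one = 0.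
Proof. by elim: k => [|k IH] /=; [rewrite Ct_one | rewrite -/(iter k.+1 _ _) IH Ct0]. Qed.

Lemma EN_one A s N : EN s (Ct A) N one = one.
Proof.
rewrite /EN big_ord_recl big1 ?addr0 /=; first by rewrite expr0 div1r invr1 scale1r.
by move=> k _; rewrite add0n; have /= -> := iter_one A k; rewrite scaler0.
Qed.

Lemma EN_mono A (AA : A *m A = 0) s S N : (#|S| <= N)%N ->
  EN s (Ct A) N (mono C S) = Psi (row1 (1%:M + s *: A)) (mono C S).
Proof.
elim/set_ind: S N => [|a S aS IH] N.
  by rewrite Psi_one EN_one.
rewrite cardsU1 aS add1n; case: N => // N ltSN.
rewrite mono_ins // ENZ PsiZ Psi_theta_W EN_theta // !IH //; last exact: ltnW.
by rewrite row1D row1Z row1_1 WDl WZl.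
Qed.

Lemma EN_Psi A (AA : A *m A = 0) s N f : (m <= N)%N ->
  EN s (Ct A) N f = Psi (row1 (1%:M + s *: A)) f.
Proof.
move=> mN; rewrite (form_decomp f) EN_sum Psi_sum; apply: eq_bigr => S _.
rewrite ENZ PsiZ EN_mono //; apply: leq_trans mN.
by apply: leq_trans (max_card (mem S)) _; rewrite card_ord.
Qed.

Lemma m_le_sets : (m <= #|{set 'I_m}|)%N.
Proof.
rewrite -cardsT -powersetT card_powerset cardsT card_ord.
exact: ltnW (ltn_expl m (isT : (1 < 2)%N)).
Qed.

Lemma opexp_Psi A (AA : A *m A = 0) s f :
  opexp s (contr A) f = Psi (row1 (1%:M + s *: A)) f.
Proof. by rewrite CtE -(EN_Psi AA s f m_le_sets). Qed.

Lemma scontr_Psi A f : scontr A f = Psi (row1 A) f.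
Proof.
rewrite /scontr /Psi; apply: eq_bigr => S _; congr (_ *: _).
by rewrite WE /Pw; apply: eq_bigr => s _; rewrite CtE Ct_theta.
Qed.

Lemma opinv_eq (g : form -> form) y x : injective g -> g x = y -> opinv g y = x.
Proof.
move=> gi gx; apply: gi; rewrite gx.
exact: (epsilon_spec (inhabits (0 : form)) (fun z => g z = y) (ex_intro _ x gx)).
Qed.

End Forms.

Section Frame.
Variable C : numClosedFieldType.
Variable n : nat.
Variable phi : 'M[C]_n.
Local Notation ph := (conjm phi).
Local Notation P := (1%:M - phi *m conjm phi).
Local Notation Q := (1%:M - conjm phi *m phi).

Lemma Ifull_1 : Ifull = 1%:M :> 'M[C]_(n + n).
Proof. by rewrite /Ifull /Ip /Ipp add_block_mx !addr0 add0r -scalar_mx_block. Qed.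

Lemma A_block : Ifull + beltrami phi + beltrami_bar phi = block_mx 1%:M phi ph 1%:M.
Proof.
by rewrite /Ifull /Ip /Ipp /beltrami /beltrami_bar !add_block_mx !addr0 !add0r.
Qed.

Lemma bb0 : beltrami phi *m beltrami phi = 0.
Proof. by rewrite /beltrami mulmx_block !mulmx0 !mul0mx !addr0 block_mx0. Qed.

Lemma M2 : (Ifull + beltrami phi + beltrami_bar phi) *m (1%:M + (-1) *: beltrami phi) =
  Ifull - emb01_01 (conjm phi *m phi) + beltrami_bar phi.
Proof.
rewrite A_block Ifull_1 /beltrami /beltrami_bar /emb01_01 (scalar_mx_block n n).
rewrite scale_block_mx !scaler0 add_block_mx !addr0 add0r mulmx_block.
rewrite opp_block_mx !oppr0 !add_block_mx !addr0 !add0r.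
rewrite ?mul1mx ?mulmx1 ?mulmx0 ?mul0mx ?addr0 ?add0r.
by rewrite !scaleN1r addNr mulmxN addrC.
Qed.

Lemma detA : \det (block_mx 1%:M phi ph 1%:M) = \det P.
Proof.
have -> : block_mx 1%:M phi ph 1%:M = block_mx P phi 0 1%:M *m block_mx 1%:M 0 ph 1%:M.
  rewrite mulmx_block ?mulmx1 ?mulmx0 ?mul1mx ?mul0mx ?addr0 ?add0r. 
  by rewrite subrK.
by rewrite det_mulmx det_ublock det_lblock !det1 !mulr1.
Qed.

Lemma detQ : \det (block_mx 1%:M phi ph 1%:M) = \det Q.
Proof.
have -> : block_mx 1%:M phi ph 1%:M = block_mx 1%:M 0 ph 1%:M *m block_mx 1%:M phi 0 Q.
  rewrite mulmx_block ?mulmx1 ?mulmx0 ?mul1mx ?mul0mx ?addr0 ?add0r. 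
  by rewrite addrC subrK.
by rewrite det_mulmx det_ublock det_lblock !det1 !mul1r.
Qed.

Hypothesis hdet : \det P != 0.

Lemma P_unit : P \in unitmx. Proof. by rewrite unitmxE unitfE. Qed.
Lemma Q_unit : Q \in unitmx. Proof. by rewrite unitmxE unitfE -detQ detA. Qed.
Lemma A_unit : (Ifull + beltrami phi + beltrami_bar phi) \in unitmx.
Proof. by rewrite A_block unitmxE unitfE detA. Qed.

Lemma M4 : (Ip + emb01_01 (invmx Q) - emb10_01 (ph *m invmx P)) *m
           (Ifull + beltrami phi + beltrami_bar phi) = 1%:M + 1 *: beltrami phi.
Proof.
have k : ph *m P = Q *m ph by rewrite mulmxBr mulmxBl mulmx1 mul1mx mulmxA.
have e1 : invmx Q *m ph = ph *m invmx P.
  transitivity (invmx Q *m (ph *m P) *m invmx P).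
    by rewrite -!mulmxA (mulmxV P_unit) mulmx1.
  by rewrite k !mulmxA (mulVmx Q_unit) mul1mx.
have e2 : invmx Q - ph *m invmx P *m phi = 1%:M.
  rewrite -e1 -mulmxA -{1}(mulmx1 (invmx Q)) -mulmxBr.
  exact: (mulVmx Q_unit).
rewrite A_block /Ip /emb01_01 /emb10_01 /beltrami (scalar_mx_block n n).
rewrite opp_block_mx !oppr0 !add_block_mx scale_block_mx !scaler0 add_block_mx mulmx_block.
rewrite ?mulmx1 ?mulmx0 ?mul1mx ?mul0mx ?addr0 ?add0r ?scale1r.
rewrite (mul0mx _ ph); congr block_mx; first exact: addr0; first exact: mul1mx.
  by rewrite e1; apply: addNr.
by rewrite mulNmx addrC; apply: e2.
Qed.

End Frame.

Theorem mainTheorem13 (C : numClosedFieldType) (n : nat) (phi : 'M[C]_n) :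
  \det (1%:M - phi *m conjm phi) != 0 ->
  [/\ (forall f : cform C (n + n),
         opexp (-1) (i_phi phi) (eext phi f)
         = scontr (Ifull - emb01_01 (conjm phi *m phi) + beltrami_bar phi) f),
      bijective (eext phi) &
      (forall f : cform C (n + n),
         opinv (eext phi) (opexp 1 (i_phi phi) f)
         = scontr (Ip + emb01_01 (invmx (1%:M - conjm phi *m phi))
                   - emb10_01 (conjm phi *m invmx (1%:M - phi *m conjm phi))) f)].
Proof.
move=> hdet.
have eextE : forall f, eext phi f = Psi (row1 (Ifull + beltrami phi + beltrami_bar phi)) f.
  by move=> f; rewrite /eext scontr_Psi.
have Au := A_unit hdet.
have bij : bijective (eext phi).
  exists (fun f => Psi (row1 (invmx (Ifull + beltrami phi + beltrami_bar phi))) f) => f.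
    by rewrite eextE Psi_compM (mulmxV Au) Psi_id.
  by rewrite eextE Psi_compM (mulVmx Au) Psi_id.
split => // f.
  by rewrite /i_phi (opexp_Psi (bb0 phi)) eextE Psi_compM M2 scontr_Psi.
apply: opinv_eq (bij_inj bij) _.
by rewrite eextE scontr_Psi Psi_compM (M4 hdet) /i_phi (opexp_Psi (bb0 phi)).
Qed.
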